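(* For two nonempty convex sets $A\subseteq B\subseteq\mathbb{R}^d_{\geq 0}$ where $A$ is down-closed, $\operatorname{rdist}(A,B)=\operatorname{LPgapMax}(A,B)$.
   Context: A convex set $C\subseteq\mathbb{R}^d_{\geq0}$ is down-closed if $x\in C$, $y\in\mathbb{R}^d_{\geq0}$, $y\leq x$ imply $y\in C$. $\operatorname{LPgapMax}(A,B)=\inf\{\varepsilon\geq0: (1+\varepsilon)\sup_{a\in A}c^\intercal a\geq\sup_{b\in B}c^\intercal b\ \ \forall c\in\mathbb{R}^d_{\geq0}\}$. For nonempty convex $A\subseteq B\subseteq\mathbb{R}^d$, $\operatorname{rdist}(A,B)=\sup_{\pi}\frac{\sup_{b\in B}\inf_{a\in A}|\pi(b)-\pi(a)|}{\sup_{a,a'\in A}|\pi(a)-\pi(a')|}$ over all linear $\pi:\mathbb{R}^d\to\mathbb{R}$, with fractions having denominator $\infty$ and $0/0$ interpreted as $0$. *)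

(* Defs.v *)
From HB Require Import structures.
From mathcomp Require Import all_boot all_order all_algebra.
From mathcomp Require Import all_classical all_reals ereal.
Set Implicit Arguments. Unset Strict Implicit. Unset Printing Implicit Defensive.
Import Order.TTheory GRing.Theory Num.Theory.
Local Open Scope ring_scope.
Local Open Scope classical_set_scope.

Section Defs.
Variables (R : realType) (d : nat).
Local Notation V := 'rV[R]_d.

Definition nonneg_vec (x : V) : Prop := forall i, 0 <= x 0 i.

Definition convex_set (C : set V) : Prop :=
  forall x y (t : R), C x -> C y -> 0 <= t -> t <= 1 ->
    C (t *: x + (1 - t) *: y).

Definition down_closed (C : set V) : Prop :=
  forall x y, C x -> nonneg_vec y -> (forall i, y 0 i <= x 0 i) -> C y.

Definition dotv (c x : V) : R := \sum_(i < d) c 0 i * x 0 i.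

Definition supdot (A : set V) (c : V) : \bar R :=
  ereal_sup [set (dotv c a)%:E | a in A].

Definition LPgapMax (A B : set V) : \bar R :=
  ereal_inf [set eps%:E | eps in [set eps : R | 0 <= eps /\
     forall c, nonneg_vec c -> (supdot B c <= (1 + eps)%:E * supdot A c)%E]].

Definition is_linear_fun (pi : V -> R) : Prop :=
  forall (a : R) (x y : V), pi (a *: x + y) = a * pi x + pi y.

(* fraction N / D with conventions: D = +oo -> 0, 0/0 = 0, N/0 = +oo for N > 0 *)
Definition rfrac (N D : \bar R) : \bar R :=
  if D == +oo%E then 0%E
  else if D == 0%E then (if N == 0%E then 0%E else +oo%E)
  else (N * (fine D)^-1%:E)%E.

Definition rdist_num (A B : set V) (pi : V -> R) : \bar R :=
  ereal_sup [set ereal_inf [set (`|pi b - pi a|)%:E | a in A] | b in B].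

Definition rdist_den (A : set V) (pi : V -> R) : \bar R :=
  ereal_sup [set (`|pi a - pi a'|)%:E | a in A & a' in A].

Definition rdist (A B : set V) : \bar R :=
  ereal_sup [set rfrac (rdist_num A B pi) (rdist_den A pi) | pi in is_linear_fun].

End Defs.

(* Main.v *)
Require Import Defs.
From HB Require Import structures.
From mathcomp Require Import all_boot all_order all_algebra.
From mathcomp Require Import all_classical all_reals ereal.
From mathcomp Require Import lra.
Local Open Scope classical_set_scope.

Section Helpers.
Import Order.TTheory GRing.Theory Num.Theory.
Local Open Scope ring_scope.
Variables (R : realType) (d : nat).
Local Notation V := 'rV[R]_d.

Lemma dotvDr (c x y : V) (a : R) : dotv c (a *: x + y) = a * dotv c x + dotv c y.
Proof.
rewrite /dotv big_distrr -big_split /=; apply: eq_bigr => i _.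
by rewrite !mxE mulrDr mulrCA.
Qed.

Lemma dotvNl (c x : V) : dotv (- c) x = - dotv c x.
Proof.
rewrite /dotv -sumrN; apply: eq_bigr => i _; by rewrite !mxE mulNr.
Qed.

Lemma dotv0r (c : V) : dotv c 0 = 0.
Proof. rewrite /dotv big1 // => i _; by rewrite mxE mulr0. Qed.

Lemma dotv_ge0 (c x : V) : nonneg_vec c -> nonneg_vec x -> 0 <= dotv c x.
Proof. move=> hc hx; rewrite /dotv; apply: sumr_ge0 => i _; exact: mulr_ge0. Qed.

Lemma dotv_lin (c : V) : is_linear_fun (dotv c).
Proof. move=> a x y; exact: dotvDr. Qed.

Lemma lin_dotv (pi : V -> R) : is_linear_fun pi ->
  pi = dotv (\row_i pi (delta_mx 0 i)).
Proof.
move=> lin; apply: funext => x.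
have p0 : pi 0 = 0.
  by have := lin (-1) 0 0; rewrite scaler0 addr0 mulN1r addNr.
have pD : forall u v, pi (u + v) = pi u + pi v.
  by move=> u v; have := lin 1 u v; rewrite scale1r mul1r.
rewrite {1}(matrix_sum_delta x) big_ord1.
rewrite (big_morph pi pD p0) /dotv; apply: eq_bigr => i _.
have := lin (x 0 i) (delta_mx 0 i) 0; rewrite addr0 p0 addr0 => ->.
by rewrite mxE mulrC.
Qed.

Definition posp (c : V) : V := \row_i Num.max (c 0 i) 0.
Definition mask (c a : V) : V := \row_i (if 0 < c 0 i then a 0 i else 0).

Lemma posp_nn c : nonneg_vec (posp c).
Proof. by move=> i; rewrite mxE le_max lexx orbT. Qed.

Lemma dotv_mask c a : dotv c (mask c a) = dotv (posp c) a.
Proof.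
rewrite /dotv; apply: eq_bigr => i _; rewrite !mxE.
by case: ltP => h; rewrite ?mulr0 ?mul0r.
Qed.

Lemma dotv_le_posp c b : nonneg_vec b -> dotv c b <= dotv (posp c) b.
Proof.
move=> hb; rewrite /dotv; apply: ler_sum => i _; rewrite mxE.
by apply: ler_wpM2r => //; rewrite le_max lexx.
Qed.

Lemma mask_in (A : set V) c a : down_closed A -> (forall x, A x -> nonneg_vec x) ->
  A a -> A (mask c a).
Proof.
move=> dc nn Aa; apply: (dc a) => // i; rewrite mxE; case: ifP => _ //; exact: nn.
Qed.

Lemma scale_in (A : set V) (t : R) a : down_closed A -> (forall x, A x -> nonneg_vec x) ->
  A a -> 0 <= t -> t <= 1 -> A (t *: a).
Proof.
move=> dc nn Aa t0 t1; apply: (dc a) => //= i; rewrite mxE.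
  exact: mulr_ge0 (nn _ Aa i).
by rewrite -[leRHS]mul1r; apply: ler_wpM2r => //; exact: nn.
Qed.

Lemma dotvZ (c a : V) (t : R) : dotv c (t *: a) = t * dotv c a.
Proof. by have := dotvDr c a 0 t; rewrite addr0 dotv0r addr0. Qed.

Lemma key (A B : set V) (c b : V) (eps D : R) :
  A 0 -> down_closed A -> (forall x, A x -> nonneg_vec x) ->
  B b -> nonneg_vec b -> 0 <= dotv c b -> 0 <= eps ->
  (forall a a', A a -> A a' -> `|dotv c a - dotv c a'| <= D) ->
  (supdot B (posp c) <= (1 + eps)%:E * supdot A (posp c))%E ->
  forall del, 0 < del -> exists a, A a /\ `|dotv c b - dotv c a| <= eps * D + del.
Proof.
move=> A0 dc nn Bb nnb cb0 eps0 HD adm del del0.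
have D0 : 0 <= D by have := HD _ _ A0 A0; rewrite subrr normr0.
have Sge0 : (0 <= supdot A (posp c))%E.
  by apply: le_ereal_sup_tmp; exists 0%:E; [exists 0; rewrite ?dotv0r|].
have SleD : (supdot A (posp c) <= D%:E)%E.
  apply/ereal_supP => _ [a Aa <-]; rewrite lee_fin -dotv_mask.
  have := HD _ _ (mask_in A c a dc nn Aa) A0; rewrite dotv0r subr0.
  exact: le_trans (ler_norm _).
have [s Es] : exists s, supdot A (posp c) = s%:E.
  by move: Sge0 SleD; case: (supdot A (posp c)) => [s||] //; exists s.
rewrite Es !lee_fin in Sge0 SleD.
have cpb : dotv (posp c) b <= (1 + eps) * s.
  rewrite -lee_fin EFinM -Es; apply: le_trans adm.
  by apply: le_ereal_sup_tmp; exists (dotv (posp c) b)%:E => //; exists b.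
have cb := le_trans (dotv_le_posp c b nnb) cpb.
have : ((s - del)%:E < supdot A (posp c))%E by rewrite Es lte_fin; lra.
move=> /ereal_sup_gtP [_ [a Aa <-]]; rewrite lte_fin => lta.
have Aa' := mask_in A c a dc nn Aa.
have v0 : 0 <= dotv (posp c) a by apply: dotv_ge0 (posp_nn c) (nn _ Aa).
have epsD : eps * s <= eps * D by apply: ler_wpM2l.
have epsD0 : 0 <= eps * D by apply: mulr_ge0.
case: (leP (dotv c b) (dotv (posp c) a)) => hv.
  have [v00|vpos] := eqVneq (dotv (posp c) a) 0.
    exists 0; split => //; rewrite dotv0r subr0.
    have -> : dotv c b = 0 by apply/eqP; rewrite eq_le cb0 andbT -v00.
    rewrite normr0; lra.
  exists ((dotv c b / dotv (posp c) a) *: mask c a); split.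
    apply: scale_in => //; first exact: divr_ge0.
    by rewrite ler_pdivrMr ?mul1r // lt_neqAle eq_sym vpos.
  rewrite dotvZ dotv_mask divfK // subrr normr0; lra.
exists (mask c a); split => //; rewrite dotv_mask gtr0_norm ?subr_gt0 //.
nra.
Qed.

Lemma den_ge0 (A : set V) (pi : V -> R) a0 : A a0 -> (0 <= rdist_den A pi)%E.
Proof.
move=> Aa0; apply: le_ereal_sup_tmp; exists 0%:E => //.
by exists a0 => //; exists a0 => //; rewrite subrr normr0.
Qed.

Lemma num_ge0 (A B : set V) (pi : V -> R) b0 : B b0 -> (0 <= rdist_num A B pi)%E.
Proof.
move=> Bb0; apply: le_ereal_sup_tmp; eexists; first by exists b0.
by apply/ereal_infP => _ [a Aa <-]; rewrite lee_fin.
Qed.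

Lemma rfrac_ge0 (N D : \bar R) : (0 <= N)%E -> (0 <= D)%E -> (0 <= rfrac N D)%E.
Proof.
move=> N0 D0; rewrite /rfrac; case: ifP => // _; case: ifP => _; first by case: ifP.
apply: mule_ge0 => //; rewrite lee_fin invr_ge0; case: D D0 => //= r; by rewrite lee_fin.
Qed.

Lemma dir1 (A B : set V) (c : V) (eps : R) b0 :
  A 0 -> down_closed A -> (forall x, A x -> nonneg_vec x) ->
  (forall x, B x -> nonneg_vec x) -> B b0 -> 0 <= eps ->
  (forall c', nonneg_vec c' -> (supdot B c' <= (1 + eps)%:E * supdot A c')%E) ->
  (rfrac (rdist_num A B (dotv c)) (rdist_den A (dotv c)) <= eps%:E)%E.
Proof.
move=> A0 dc nn nnB Bb0 eps0 adm.
have den0 := den_ge0 A (dotv c) 0 A0.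
have num0 := num_ge0 A B (dotv c) b0 Bb0.
case E: (rdist_den A (dotv c)) den0 => [D| |] den0 //.
rewrite lee_fin in den0.
have HD : forall a a', A a -> A a' -> `|dotv c a - dotv c a'| <= D.
  move=> a a' Aa Aa'; rewrite -lee_fin -E; apply: ereal_sup_ubound.
  by exists a => //; exists a'.
have numle : (rdist_num A B (dotv c) <= (eps * D)%:E)%E.
  apply/ereal_supP => _ [b Bb <-]; apply/lee_addgt0Pr => del del0.
  case: (leP 0 (dotv c b)) => h.
    have [a [Aa ha]] := key A B c b eps D A0 dc nn Bb (nnB _ Bb) h eps0 HD (adm _ (posp_nn c)) del del0.
    apply: ge_ereal_inf; exists (`|dotv c b - dotv c a|)%:E; first by exists a.
    by rewrite -EFinD lee_fin.
  have h' : 0 <= dotv (- c) b by rewrite dotvNl oppr_ge0 ltW.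
  have HD' : forall a a', A a -> A a' -> `|dotv (- c) a - dotv (- c) a'| <= D.
    by move=> a a' Aa Aa'; rewrite !dotvNl -opprD normrN; apply: HD.
  have [a [Aa ha]] := key A B (- c) b eps D A0 dc nn Bb (nnB _ Bb) h' eps0 HD' (adm _ (posp_nn (- c))) del del0.
  rewrite !dotvNl -opprD normrN in ha.
  apply: ge_ereal_inf; exists (`|dotv c b - dotv c a|)%:E; first by exists a.
  by rewrite -EFinD lee_fin.
rewrite /rfrac.
have -> : (D%:E == +oo%E :> \bar R) = false by [].
have [D00|Dpos] := eqVneq D 0.
  rewrite D00 eqxx.
  have -> : rdist_num A B (dotv c) = 0%E.
    by apply/le_anti; rewrite num0 andbT; move: numle; rewrite D00 mulr0.
  by rewrite eqxx lee_fin.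
rewrite eqe (negbTE Dpos) /=.
apply: le_trans (lee_wpmul2r _ numle) _; first by rewrite lee_fin invr_ge0.
by rewrite -EFinM lee_fin mulfK.
Qed.

Lemma dir2 (A B : set V) (c : V) (r : R) :
  A 0 -> (forall x, A x -> nonneg_vec x) -> 0 <= r -> nonneg_vec c ->
  (rfrac (rdist_num A B (dotv c)) (rdist_den A (dotv c)) <= r%:E)%E ->
  (supdot B c <= (1 + r)%:E * supdot A c)%E.
Proof.
move=> A0 nn r0 nc H.
have Sge0 : (0 <= supdot A c)%E.
  by apply: le_ereal_sup_tmp; exists 0%:E; [exists 0; rewrite ?dotv0r|].
case ES: (supdot A c) Sge0 => [s| |] Sge0 //; last first.
  by rewrite gt0_muley ?leey // lte_fin; lra.
rewrite lee_fin in Sge0.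
have cas : forall a, A a -> 0 <= dotv c a <= s.
  move=> a Aa; rewrite dotv_ge0 //=; last exact: nn.
  by rewrite -lee_fin -ES; apply: ereal_sup_ubound; exists a.
have Eden : rdist_den A (dotv c) = s%:E.
  apply/le_anti/andP; split.
    apply/ereal_supP => _ [a Aa [a' Aa' <-]]; rewrite lee_fin ler_norml.
    move: (cas _ Aa) (cas _ Aa') => /andP[? ?] /andP[? ?]; apply/andP; split; lra.
  rewrite -ES; apply/ereal_supP => _ [a Aa <-]; apply: le_ereal_sup_tmp.
  exists (`|dotv c a - dotv c 0|)%:E; first by exists a => //; exists 0.
  by rewrite dotv0r subr0 lee_fin ler_norm.
have numle : (rdist_num A B (dotv c) <= (r * s)%:E)%E.
  move: H; rewrite /rfrac Eden.
  have -> : (s%:E == +oo%E :> \bar R) = false by [].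
  have [s00|spos] := eqVneq s 0.
    rewrite s00 eqxx mulr0; case: eqP => [->//|_]; by rewrite leye_eq.
  rewrite eqe (negbTE spos) /= => H.
  have := lee_wpmul2r (x := s%:E) _ H; rewrite lee_fin => /(_ Sge0).
  by rewrite -muleA -EFinM mulVf // mule1 EFinM.
apply/ereal_supP => _ [b Bb <-].
have h1 : ((dotv c b - s)%:E <= ereal_inf [set (`|dotv c b - dotv c a|)%:E | a in A])%E.
  apply/ereal_infP => _ [a Aa <-]; rewrite lee_fin; apply: le_trans (ler_norm _).
  move: (cas _ Aa) => /andP[? ?]; lra.
have h2 : (ereal_inf [set (`|dotv c b - dotv c a|)%:E | a in A] <= rdist_num A B (dotv c))%E.
  by apply: ereal_sup_ubound; exists b.
have := le_trans h1 (le_trans h2 numle); rewrite lee_fin -EFinM lee_fin => h.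
nra.
Qed.

End Helpers.
Import Order.TTheory GRing.Theory Num.Theory.

Theorem mainTheorem5 (R : realType) (d : nat) (A B : set 'rV[R]_d) :
  A !=set0 -> B !=set0 -> convex_set A -> convex_set B ->
  A `<=` B -> (forall x, B x -> nonneg_vec x) -> down_closed A ->
  rdist A B = LPgapMax A B.
Proof.
move=> [a0 Aa0] [b0 Bb0] _ _ AB nnB dc.
have nn : forall x, A x -> nonneg_vec x by move=> x Ax; exact: nnB (AB x Ax).
have A0 : A 0%R.
  apply: (dc a0) => // i; rewrite mxE //; exact: (nn _ Aa0).
apply/Order.POrderTheory.le_anti/andP; split.
  apply/ereal_supP => _ [pi lin <-]; rewrite (lin_dotv _ _ _ lin).
  apply/ereal_infP => _ [eps [eps0 adm] <-]; exact: (dir1 _ _ _ _ _ _ _ A0 dc nn nnB Bb0 eps0 adm).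
have r0 : (0 <= rdist A B)%E.
  apply: le_ereal_sup_tmp; eexists; first by exists (dotv 0) => //; exact: dotv_lin.
  exact: rfrac_ge0 (num_ge0 _ _ _ _ _ _ Bb0) (den_ge0 _ _ _ _ _ Aa0).
case Er: (rdist A B) r0 => [r| |] r0 //; last by rewrite leey.
apply: ereal_inf_lbound; exists r => //; split; first by rewrite -lee_fin.
move=> c nc; apply: dir2; [exact: A0 | exact: nn | by rewrite -lee_fin | exact: nc | ].
rewrite -Er; apply: ereal_sup_ubound; exists (dotv c) => //; exact: dotv_lin.
Qed.
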